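(* Let $0<\alpha<1$, $\sigma=1-\alpha/2$, $l,T>0$, $N,M\ge1$, $h=l/N$, $x_i=ih$, $\tau=T/M$, $t_j=j\tau$, $t_{j+\sigma}=(j+\sigma)\tau$. Let $k(x,t)\ge c_1>0$, $q(x,t)\ge0$ and $f(x,t)$ be continuous on $[0,l]\times[0,T]$, and $u_0$ a function on $[0,l]$. Set $a_i^{j+1}=k(x_{i-1/2},t_{j+\sigma})$, $d_i^{j+1}=q(x_i,t_{j+\sigma})$, $\varphi_i^{j+1}=f(x_i,t_{j+\sigma})$ with $x_{i-1/2}=(i-1/2)h$, and $$(\Lambda y)_i=\frac{a_{i+1}^{j+1}y_{i+1}-(a_{i+1}^{j+1}+a_i^{j+1})y_i+a_i^{j+1}y_{i-1}}{h^2}-d_i^{j+1}y_i .$$ Let $y$ solve $$\Delta^\alpha_{0t_{j+\sigma}}y_i=(\Lambda y^{(\sigma)})_i+\varphi_i^{j+1},\quad i=1,\dots,N-1,\ j=0,\dots,M-1,$$ $$y_0^j=y_N^j=0,\qquad y_i^0=u_0(x_i),$$ where $y^{(\sigma)}=\sigma y^{j+1}+(1-\sigma)y^j$. Then the scheme is unconditionally stable and for every $j=0,\dots,M-1$ $$\|y^{j+1}\|_0^2\le\|y^0\|_0^2+\frac{l^2T^\alpha\Gamma(1-\alpha)}{4c_1}\max_{1\le j\le M}\|\varphi^j\|_0^2 .$$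
   Context: $(y,v)=\sum_{i=1}^{N-1}y_iv_ih$, $\|y\|_0^2=(y,y)$. The discrete fractional derivative is $\Delta^\alpha_{0t_{j+\sigma}}y_i=\frac{\tau^{1-\alpha}}{\Gamma(2-\alpha)}\sum_{s=0}^{j}c_{j-s}\frac{y_i^{s+1}-y_i^s}{\tau}$ with: $a_0=\sigma^{1-\alpha}$, $a_l=(l'+\sigma)^{1-\alpha}-(l'-1+\sigma)^{1-\alpha}$ for index $l'\ge1$, $b_{l'}=\frac{1}{2-\alpha}[(l'+\sigma)^{2-\alpha}-(l'-1+\sigma)^{2-\alpha}]-\frac12[(l'+\sigma)^{1-\alpha}+(l'-1+\sigma)^{1-\alpha}]$ for $l'\ge1$; for $j=0$, $c_0=a_0$; for $j\ge1$, $c_0=a_0+b_1$, $c_s=a_s+b_{s+1}-b_s$ ($1\le s\le j-1$), $c_j=a_j-b_j$. *)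

(* Defs.v *)
From Stdlib Require Import Reals List.
From Coquelicot Require Import Coquelicot.
Open Scope R_scope.

Definition Gamma (s : R) : R :=
  RInt_gen (fun t => Rpower t (s - 1) * exp (- t)) (at_right 0) (Rbar_locally p_infty).

(* sum_{i=m}^{n-1} F i  (empty if n <= m) *)
Definition sumR (m n : nat) (F : nat -> R) : R :=
  fold_right Rplus 0 (map F (seq m (n - m))).

Definition norm0sq (N : nat) (h : R) (v : nat -> R) : R :=
  sumR 1 N (fun i => v i * v i * h).

(* max_{1 <= j <= M} g j   (g takes nonnegative values here) *)
Definition maxR (M : nat) (g : nat -> R) : R :=
  fold_right Rmax 0 (map g (seq 1 M)).

(* coefficients of the L2-1_sigma approximation *)
Definition a_coef (alpha sigma : R) (n : nat) : R :=
  match n with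
  | O => Rpower sigma (1 - alpha)
  | S _ => Rpower (INR n + sigma) (1 - alpha) - Rpower (INR n - 1 + sigma) (1 - alpha)
  end.

Definition b_coef (alpha sigma : R) (n : nat) : R :=
  1 / (2 - alpha) * (Rpower (INR n + sigma) (2 - alpha) - Rpower (INR n - 1 + sigma) (2 - alpha))
  - 1 / 2 * (Rpower (INR n + sigma) (1 - alpha) + Rpower (INR n - 1 + sigma) (1 - alpha)).

Definition c_coef (alpha sigma : R) (j s : nat) : R :=
  if Nat.eqb j 0 then a_coef alpha sigma 0
  else if Nat.eqb s 0 then a_coef alpha sigma 0 + b_coef alpha sigma 1
  else if Nat.ltb s j then a_coef alpha sigma s + b_coef alpha sigma (s + 1) - b_coef alpha sigma s
  else a_coef alpha sigma j - b_coef alpha sigma j.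

(* Delta^alpha_{0 t_{j+sigma}} y_i  for the grid function y j i = y_i^j *)
Definition frac_deriv (alpha sigma tau : R) (y : nat -> nat -> R) (j i : nat) : R :=
  Rpower tau (1 - alpha) / Gamma (2 - alpha) *
  sum_f_R0 (fun s => c_coef alpha sigma j (j - s) * ((y (S s) i - y s i) / tau)) j.

Definition rect (l T : R) (p : R * R) : Prop :=
  0 <= fst p <= l /\ 0 <= snd p <= T.
Definition cont_on_rect (l T : R) (g : R -> R -> R) : Prop :=
  forall x t, rect l T (x, t) ->
    filterlim (fun p : R * R => g (fst p) (snd p))
      (within (rect l T) (locally (x, t))) (locally (g x t)).

(* Main.v *)
Require Import Defs.
From Stdlib Require Import Reals List Lra Lia Psatz.
From Coquelicot Require Import Coquelicot.
Open Scope R_scope.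

Fixpoint sm (n : nat) (F : nat -> R) : R :=
  match n with O => 0 | S n => sm n F + F n end.

Lemma fold_seq_sm F m k :
  fold_right Rplus 0 (map F (seq m k)) = sm (m + k) F - sm m F.
Proof.
  revert m; induction k as [|k IH]; intros m; simpl.
  - rewrite Nat.add_0_r; ring.
  - rewrite IH. replace (m + S k)%nat with (S m + k)%nat by lia. simpl. ring.
Qed.

Lemma sumR_sm m n F : (m <= n)%nat -> sumR m n F = sm n F - sm m F.
Proof.
  intros H; unfold sumR; rewrite fold_seq_sm.
  replace (m + (n - m))%nat with n by lia; ring.
Qed.

Lemma sm_plus n F G : sm n (fun i => F i + G i) = sm n F + sm n G.
Proof. induction n; simpl; [ring| rewrite IHn; ring]. Qed.

Lemma sm_scal n c F : sm n (fun i => c * F i) = c * sm n F.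
Proof. induction n; simpl; [ring| rewrite IHn; ring]. Qed.

Lemma sm_le n F G : (forall i, (i < n)%nat -> F i <= G i) -> sm n F <= sm n G.
Proof.
  induction n; intros H; simpl; [lra|].
  assert (sm n F <= sm n G) by (apply IHn; intros; apply H; lia).
  assert (F n <= G n) by (apply H; lia). lra.
Qed.

Lemma sm_ext n F G : (forall i, (i < n)%nat -> F i = G i) -> sm n F = sm n G.
Proof.
  induction n; intros H; simpl; [lra|].
  rewrite IHn by (intros; apply H; lia). rewrite (H n) by lia. ring.
Qed.

Lemma sm_const n c : sm n (fun _ => c) = INR n * c.
Proof. induction n; simpl sm; [simpl; ring|]. rewrite IHn, S_INR; ring. Qed.

Lemma sm_nonneg n F : (forall i, (i < n)%nat -> 0 <= F i) -> 0 <= sm n F.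
Proof. intros H. replace 0 with (sm n (fun _ => 0)). apply sm_le; auto.
  rewrite sm_const; ring. Qed.

Lemma sm_exch n j (F : nat -> nat -> R) :
  sm n (fun i => sum_f_R0 (fun s => F s i) j) = sum_f_R0 (fun s => sm n (F s)) j.
Proof.
  induction j; simpl; [reflexivity|].
  rewrite sm_plus, IHj. reflexivity.
Qed.

Lemma sum_rev F n : sum_f_R0 F n = sum_f_R0 (fun k => F (n - k)%nat) n.
Proof.
  induction n.
  - reflexivity.
  - simpl sum_f_R0 at 1. rewrite IHn.
    rewrite (decomp_sum (fun k => F (S n - k)%nat) (S n)) by lia.
    simpl pred. replace (S n - 0)%nat with (S n) by lia.
    assert (E: sum_f_R0 (fun i => F (S n - S i)%nat) n = sum_f_R0 (fun k => F (n - k)%nat) n)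
      by (apply sum_eq; intros; f_equal).
    rewrite E; ring.
Qed.

Lemma abel C G n :
  sum_f_R0 (fun k => C k * (G k - G (S k))) n =
  sum_f_R0 (fun k => (C k - C (S k)) * (G 0%nat - G (S k))) n + C (S n) * (G 0%nat - G (S n)).
Proof.
  induction n; simpl; [ring|]. rewrite IHn. ring.
Qed.

Lemma tele C n : sum_f_R0 (fun k => C k - C (S k)) n = C 0%nat - C (S n).
Proof. induction n; simpl; [ring|]. rewrite IHn; ring. Qed.

Lemma sum_le F G n : (forall k, (k <= n)%nat -> F k <= G k) -> sum_f_R0 F n <= sum_f_R0 G n.
Proof.
  induction n; intros H; simpl; [apply H; lia|].
  assert (sum_f_R0 F n <= sum_f_R0 G n) by (apply IHn; intros; apply H; lia).
  assert (F (S n) <= G (S n)) by (apply H; lia). lra.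
Qed.

Lemma sum_ge_first F n : (forall k, (k <= n)%nat -> 0 <= F k) -> F 0%nat <= sum_f_R0 F n.
Proof.
  induction n; intros H; simpl; [lra|].
  assert (F 0%nat <= sum_f_R0 F n) by (apply IHn; intros; apply H; lia).
  assert (0 <= F (S n)) by (apply H; lia). lra.
Qed.

Definition Chat (C : nat -> R) (j k : nat) : R := if Nat.leb k j then C k else 0.

Lemma frac_sum_abel (C : nat -> R) (g : nat -> R) j :
  sum_f_R0 (fun s => C (j - s)%nat * (g (S s) - g s)) j =
  sum_f_R0 (fun k => (Chat C j k - Chat C j (S k)) * (g (S j) - g (j - k)%nat)) j.
Proof.
  rewrite sum_rev.
  transitivity (sum_f_R0 (fun k => Chat C j k * ((fun k => g (S j - k)%nat) k - (fun k => g (S j - k)%nat) (S k))) j).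
  - apply sum_eq; intros k Hk. unfold Chat.
    replace (Nat.leb k j) with true by (symmetry; apply Nat.leb_le; lia).
    replace (j - (j - k))%nat with k by lia.
    replace (S (j - k)) with (S j - k)%nat by lia.
    replace (j - k)%nat with (S j - S k)%nat by lia. reflexivity.
  - rewrite abel. unfold Chat at 3.
    replace (Nat.leb (S j) j) with false by (symmetry; apply Nat.leb_gt; lia).
    rewrite Rmult_0_l, Rplus_0_r. apply sum_eq; intros k Hk.
    simpl. replace (j - k)%nat with (S j - S k)%nat by lia.
    replace (S j - 0)%nat with (S j) by lia. reflexivity.
Qed.

Lemma delta_nonneg C j k : (forall k, (k < j)%nat -> C (S k) <= C k) -> 0 <= C j ->
  (k <= j)%nat -> 0 <= Chat C j k - Chat C j (S k).
Proof.
  intros H1 H2 Hk. unfold Chat.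
  replace (Nat.leb k j) with true by (symmetry; apply Nat.leb_le; lia).
  destruct (Nat.leb (S k) j) eqn:E.
  - apply Nat.leb_le in E. specialize (H1 k ltac:(lia)). lra.
  - apply Nat.leb_gt in E. replace k with j by lia. lra.
Qed.

Lemma energy_scalar C j (s : R) (z : nat -> R) :
  (forall k, (k < j)%nat -> C (S k) <= C k) -> 0 <= C j ->
  (1 - s)^2 * C 0%nat <= s^2 * (C 0%nat - Chat C j 1) ->
  / 2 * sum_f_R0 (fun r => C (j - r)%nat * (z (S r) * z (S r) - z r * z r)) j <=
  (s * z (S j) + (1 - s) * z j) * sum_f_R0 (fun r => C (j - r)%nat * (z (S r) - z r)) j.
Proof.
  intros H1 H2 H3.
  rewrite (frac_sum_abel C (fun r => z r * z r)), (frac_sum_abel C z).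
  set (d := fun k => Chat C j k - Chat C j (S k)).
  set (Z := z (S j)). set (U0 := Z - z j).
  rewrite scal_sum, scal_sum.
  assert (Hd : forall k, (k <= j)%nat -> 0 <= d k) by (intros; apply delta_nonneg; auto).
  assert (Hsum : sum_f_R0 d j = C 0%nat).
  { unfold d. rewrite tele. unfold Chat.
    replace (Nat.leb 0 j) with true by (symmetry; apply Nat.leb_le; lia).
    replace (Nat.leb (S j) j) with false by (symmetry; apply Nat.leb_gt; lia). ring. }
  set (R := fun k => / 2 * (Z - z (j - k)%nat - (1 - s) * U0) ^ 2).
  assert (E : forall k, (k <= j)%nat ->
     d k * (Z - z (j - k)%nat) * (s * Z + (1 - s) * z j) =
     d k * (Z * Z - z (j - k)%nat * z (j - k)%nat) * / 2 + (d k * R k - (1-s)^2 * U0^2 / 2 * d k)).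
  { intros k Hk. unfold R, U0. field. }
  enough (G : sum_f_R0 (fun k => d k * (Z * Z - z (j - k)%nat * z (j - k)%nat) * / 2) j <=
    sum_f_R0 (fun k => d k * (Z - z (j - k)%nat) * (s * Z + (1 - s) * z j)) j) by exact G.
  rewrite (sum_eq _ _ j E), plus_sum, minus_sum.
  assert (Hm : sum_f_R0 (fun i => (1 - s) ^ 2 * U0 ^ 2 / 2 * d i) j = (1 - s) ^ 2 * U0 ^ 2 / 2 * C 0%nat).
  { rewrite <- Hsum, scal_sum. apply sum_eq; intros; ring. }
  rewrite Hm.
  assert (HR : d 0%nat * R 0%nat <= sum_f_R0 (fun k => d k * R k) j).
  { apply (sum_ge_first (fun k => d k * R k)). intros k Hk. apply Rmult_le_pos; [auto|]. unfold R.
    apply Rmult_le_pos; [lra| apply pow2_ge_0]. }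
  assert (HR0 : R 0%nat = / 2 * s^2 * U0^2).
  { unfold R, U0. rewrite Nat.sub_0_r. ring. }
  assert (Hd0 : d 0%nat = C 0%nat - Chat C j 1).
  { unfold d, Chat. replace (Nat.leb 0 j) with true by (symmetry; apply Nat.leb_le; lia). reflexivity. }
  rewrite HR0, Hd0 in HR.
  assert (0 <= U0^2) by apply pow2_ge_0.
  assert (0 <= U0^2 * (s^2 * (C 0%nat - Chat C j 1) - (1 - s)^2 * C 0%nat)) by (apply Rmult_le_pos; lra).
  nra.
Qed.

Lemma gronwall (CC : nat -> nat -> R) (g : nat -> R) (J : nat) (Bs cm : R) :
  0 <= Bs -> 0 < cm ->
  (forall j, (j <= J)%nat -> forall k, (k < j)%nat -> CC j (S k) <= CC j k) ->
  (forall j, (j <= J)%nat -> cm <= CC j j) ->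
  (forall j, (j <= J)%nat -> sum_f_R0 (fun r => CC j (j - r)%nat * (g (S r) - g r)) j <= Bs) ->
  forall j, (j <= J)%nat -> g (S j) <= g 0%nat + Bs / cm.
Proof.
  intros HB Hcm Hmon Hlast Hineq.
  set (E := Bs / cm).
  assert (HE : 0 <= E) by (apply Rdiv_le_0_compat; lra).
  assert (HcmE : cm * E = Bs) by (unfold E; field; lra).
  intros j; induction j as [j IH] using (well_founded_induction Wf_nat.lt_wf); intros HjJ.
  specialize (Hineq j HjJ). rewrite frac_sum_abel in Hineq.
  set (d := fun k => Chat (CC j) j k - Chat (CC j) j (S k)) in Hineq.
  assert (Hd : forall k, (k <= j)%nat -> 0 <= d k)
    by (intros; apply delta_nonneg; auto; apply Rle_trans with cm; [lra| apply Hlast; auto]).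
  assert (Hdj : d j = CC j j).
  { unfold d, Chat. rewrite (proj2 (Nat.leb_le j j)) by lia.
    replace (Nat.leb (S j) j) with false by (symmetry; apply Nat.leb_gt; lia). ring. }
  assert (Hsum : sum_f_R0 d j = CC j 0%nat).
  { unfold d. rewrite tele. unfold Chat.
    replace (Nat.leb 0 j) with true by (symmetry; apply Nat.leb_le; lia).
    replace (Nat.leb (S j) j) with false by (symmetry; apply Nat.leb_gt; lia). ring. }
  set (X := g (S j) - g 0%nat - E).
  destruct j as [|j'].
  - simpl in Hineq.
    assert (cm <= d 0%nat) by (rewrite Hdj; apply Hlast; lia).
    destruct (Rle_dec (g 1%nat - g 0%nat) 0). { lra. }
    assert (cm * (g 1%nat - g 0%nat) <= Bs).
    { apply Rle_trans with (d 0%nat * (g 1%nat - g 0%nat)); [|exact Hineq].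
      apply Rmult_le_compat_r; lra. }
    assert (g 1%nat - g 0%nat <= E). { apply Rmult_le_reg_l with cm; lra. }
    lra.
  - rewrite tech5 in Hineq. rewrite Nat.sub_diag in Hineq.
    assert (Hlow : sum_f_R0 (fun k => d k * X) j' <=
       sum_f_R0 (fun k => d k * (g (S (S j')) - g (S j' - k)%nat)) j').
    { apply sum_le; intros k Hk. apply Rmult_le_compat_l; [apply Hd; lia|].
      replace (S j' - k)%nat with (S (j' - k)) by lia.
      assert (g (S (j' - k)) <= g 0%nat + E) by (apply IH; lia). unfold X; lra. }
    rewrite <- scal_sum in Hlow. rewrite (Rmult_comm X) in Hlow.
    assert (Hdj2 : cm <= d (S j')) by (rewrite Hdj; apply Hlast; auto).
    assert (Hs : sum_f_R0 d j' + d (S j') = CC (S j') 0%nat) by (rewrite <- Hsum; reflexivity).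
    assert (Hpos : 0 < CC (S j') 0%nat).
    { assert (0 <= sum_f_R0 d j'). { apply Rle_trans with (sum_f_R0 (fun _ => 0) j'). rewrite sum_cte; lra. apply sum_le; intros; apply Hd; lia. } lra. }
    assert (CC (S j') 0%nat * X + d (S j') * E <= Bs).
    { rewrite <- Hs. change (sum_f_R0 (fun k => d k * (g (S (S j')) - g (S j' - k)%nat)) j' + d (S j') * (g (S (S j')) - g 0%nat) <= Bs) in Hineq. replace (g (S (S j')) - g 0%nat) with (X + E) in Hineq by (unfold X; ring). nra. }
    assert (CC (S j') 0%nat * X <= 0) by nra.
    assert (X <= 0). { destruct (Rle_dec X 0); auto. nra. }
    unfold X in *; lra.
Qed.

Lemma D_add f g x a b : is_derive f x a -> is_derive g x b -> is_derive (fun t => f t + g t) x (a + b).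
Proof. intros. apply (is_derive_plus f g x a b); auto. Qed.

Lemma D_mul f g x a b : is_derive f x a -> is_derive g x b -> is_derive (fun t => f t * g t) x (a * g x + f x * b).
Proof. intros. apply (is_derive_mult f g x a b); auto. intros; apply Rmult_comm. Qed.

Lemma D_cst (c x : R) : is_derive (fun _ => c) x 0.
Proof. apply (is_derive_const c x). Qed.

Lemma D_id x : is_derive (fun t => t) x 1.
Proof. apply (is_derive_id x). Qed.

Lemma D_pw r c x : 0 < x + c -> is_derive (fun t => Rpower (t + c) r) x (r * Rpower (x + c) (r - 1)).
Proof.
  intros H.
  assert (H1 : is_derive (fun t => Rpower t r) (x + c) (r * Rpower (x + c) (r - 1)))
    by (apply is_derive_Reals; apply derivable_pt_lim_power; auto).
  assert (H2 : is_derive (fun t => t + c) x 1).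
  { replace 1 with (1 + 0) by ring. apply D_add; [apply D_id| apply D_cst]. }
  pose proof (is_derive_comp (fun t => Rpower t r) (fun t => t + c) x _ _ H1 H2) as H3.
  replace (r * Rpower (x + c) (r - 1)) with (1 * (r * Rpower (x + c) (r - 1))) by ring.
  exact H3.
Qed.

Lemma mono_deriv (H dH : R -> R) a b : a <= b ->
  (forall t, a <= t <= b -> is_derive H t (dH t)) ->
  (forall t, a <= t <= b -> 0 <= dH t) -> H a <= H b.
Proof.
  intros Hab Hd Hpos.
  destruct (Req_dec a b) as [->|Hne]; [lra|].
  destruct (MVT_gen H a b dH) as [c [Hc Heq]].
  - intros x Hx. apply Hd. rewrite Rmin_left, Rmax_right in Hx by lra. lra.
  - intros x Hx. rewrite Rmin_left, Rmax_right in Hx by lra.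
    apply derivable_continuous_pt. exists (dH x). apply is_derive_Reals. apply Hd; lra.
  - rewrite Rmin_left, Rmax_right in Hc by lra.
    assert (0 <= dH c) by (apply Hpos; lra).
    assert (0 <= dH c * (b - a)) by (apply Rmult_le_pos; lra). lra.
Qed.

Lemma pw_dec r a b : r <= 0 -> 0 < a <= b -> Rpower b r <= Rpower a r.
Proof.
  intros Hr Hab. unfold Rpower.
  assert (ln a <= ln b) by (apply ln_le; lra).
  assert (r * ln b <= r * ln a) by nra.
  destruct (Req_dec (r * ln b) (r * ln a)) as [E|E]; [rewrite E; lra|].
  left; apply exp_increasing; lra.
Qed.

Lemma pw_pos r a : 0 < Rpower a r.
Proof. unfold Rpower; apply exp_pos. Qed.

Section Coef.
Variable al : R.
Hypothesis Hal : 0 < al < 1.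

Definition fr t := Rpower t (1 - al).
Definition Fr t := Rpower t (2 - al) / (2 - al).
Definition ph t := (1 - al) * Rpower t (- al).

Lemma D_fr c x : 0 < x + c -> is_derive (fun t => fr (t + c)) x (ph (x + c)).
Proof.
  intros H. unfold fr, ph. replace (- al) with (1 - al - 1) by ring. apply D_pw; auto.
Qed.

Lemma D_Fr c x : 0 < x + c -> is_derive (fun t => Fr (t + c)) x (fr (x + c)).
Proof.
  intros H. unfold Fr, fr.
  assert (H1 := D_pw (2 - al) c x H).
  pose proof (is_derive_scal _ x (/ (2 - al)) _ H1) as H2.
  replace (Rpower (x + c) (1 - al)) with (/ (2 - al) * ((2 - al) * Rpower (x + c) (2 - al - 1))).
  - eapply is_derive_ext; [|exact H2]. intros t; simpl. field. lra.
  - replace (2 - al - 1) with (1 - al) by ring. field. lra.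
Qed.

Lemma D_lfr p q c x : 0 < x + c ->
  is_derive (fun t => (p * t + q) * fr (t + c)) x (p * fr (x + c) + (p * x + q) * ph (x + c)).
Proof.
  intros H.
  assert (Hl : is_derive (fun t => p * t + q) x (p * 1 + 0))
    by (apply D_add; [apply (is_derive_scal (fun t => t)); apply D_id | apply D_cst]).
  rewrite Rmult_1_r, Rplus_0_r in Hl.
  apply (D_mul (fun t => p * t + q) (fun t => fr (t + c))); [exact Hl|apply D_fr; auto].
Qed.

Lemma D_eFr e c x : 0 < x + c -> is_derive (fun t => e * Fr (t + c)) x (e * fr (x + c)).
Proof. intros H. apply (is_derive_scal (fun t => Fr (t + c))). apply D_Fr; auto. Qed.

Definition Hg (p0 q0 e0 p1 q1 e1 p2 q2 e2 r2 r1 : R) (t : R) : R :=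
  (p0 * t + q0) * fr (t + 0) + e0 * Fr (t + 0) + (p1 * t + q1) * fr (t + 1) + e1 * Fr (t + 1)
  + (p2 * t + q2) * fr (t + 2) + e2 * Fr (t + 2) + r2 * t * t + r1 * t.

Definition dHg (p0 q0 e0 p1 q1 e1 p2 q2 e2 r2 r1 : R) (t : R) : R :=
  (p0 * fr (t + 0) + (p0 * t + q0) * ph (t + 0)) + e0 * fr (t + 0)
  + (p1 * fr (t + 1) + (p1 * t + q1) * ph (t + 1)) + e1 * fr (t + 1)
  + (p2 * fr (t + 2) + (p2 * t + q2) * ph (t + 2)) + e2 * fr (t + 2)
  + (r2 * 1 * t + r2 * t * 1) + r1 * 1.

Lemma D_Hg p0 q0 e0 p1 q1 e1 p2 q2 e2 r2 r1 x : 0 < x ->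
  is_derive (Hg p0 q0 e0 p1 q1 e1 p2 q2 e2 r2 r1) x (dHg p0 q0 e0 p1 q1 e1 p2 q2 e2 r2 r1 x).
Proof.
  intros H. unfold Hg, dHg.
  assert (A0 := D_lfr p0 q0 0 x ltac:(lra)).
  assert (B0 := D_eFr e0 0 x ltac:(lra)).
  assert (A1 := D_lfr p1 q1 1 x ltac:(lra)).
  assert (B1 := D_eFr e1 1 x ltac:(lra)).
  assert (A2 := D_lfr p2 q2 2 x ltac:(lra)).
  assert (B2 := D_eFr e2 2 x ltac:(lra)).
  assert (Q2 : is_derive (fun t => r2 * t * t) x (r2 * 1 * x + r2 * x * 1)).
  { apply (D_mul (fun t => r2 * t) (fun t => t)); [|apply D_id].
    apply (is_derive_scal (fun t => t)). apply D_id. }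
  assert (Q1 : is_derive (fun t => r1 * t) x (r1 * 1)).
  { apply (is_derive_scal (fun t => t)). apply D_id. }
  pose proof (D_add _ _ _ _ _ A0 B0) as S1.
  pose proof (D_add _ _ _ _ _ S1 A1) as S2.
  pose proof (D_add _ _ _ _ _ S2 B1) as S3.
  pose proof (D_add _ _ _ _ _ S3 A2) as S4.
  pose proof (D_add _ _ _ _ _ S4 B2) as S5.
  pose proof (D_add _ _ _ _ _ S5 Q2) as S6.
  pose proof (D_add _ _ _ _ _ S6 Q1) as S7.
  exact S7.
Qed.

Lemma Hg_mono p0 q0 e0 p1 q1 e1 p2 q2 e2 r2 r1 x : 0 < x ->
  (forall t, x <= t <= x + 1 -> 0 <= dHg p0 q0 e0 p1 q1 e1 p2 q2 e2 r2 r1 t) ->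
  Hg p0 q0 e0 p1 q1 e1 p2 q2 e2 r2 r1 x <= Hg p0 q0 e0 p1 q1 e1 p2 q2 e2 r2 r1 (x + 1).
Proof.
  intros Hx Hd. apply (mono_deriv _ (dHg p0 q0 e0 p1 q1 e1 p2 q2 e2 r2 r1)); [lra| |auto].
  intros t Ht. apply D_Hg. lra.
Qed.


Definition psi t := Rpower t (- al) - Rpower (t + 1) (- al).

Lemma ph_dec a b : 0 < a <= b -> ph b <= ph a.
Proof. intros H. unfold ph. apply Rmult_le_compat_l; [lra|]. apply pw_dec; lra. Qed.

Lemma psi_nonneg t : 0 < t -> 0 <= psi t.
Proof. intros H. unfold psi. assert (Rpower (t + 1) (- al) <= Rpower t (- al)) by (apply pw_dec; lra). lra. Qed.

Lemma psi_dec a b : 0 < a <= b -> psi b <= psi a.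
Proof.
  intros Hab. unfold psi.
  set (H := fun t => Rpower (t + 1) (- al) - Rpower (t + 0) (- al)).
  set (dH := fun t => - al * Rpower (t + 1) (- al - 1) - - al * Rpower (t + 0) (- al - 1)).
  assert (Hm : H a <= H b).
  { apply (mono_deriv H dH); [lra| |].
    - intros t Ht. unfold H, dH.
      apply (is_derive_minus (fun t => Rpower (t + 1) (- al)) (fun t => Rpower (t + 0) (- al)));
        apply D_pw; lra.
    - intros t Ht. unfold dH.
      assert (Rpower (t + 1) (- al - 1) <= Rpower (t + 0) (- al - 1)) by (apply pw_dec; lra).
      nra. }
  unfold H in Hm. rewrite !Rplus_0_r in Hm. lra.
Qed.

Definition cI x := fr (x + 1) - fr x / 2 - fr (x + 2) / 2 + Fr (x + 2) - 2 * Fr (x + 1) + Fr x.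
Definition cL x := 3 / 2 * fr (x + 1) - fr x / 2 - Fr (x + 1) + Fr x.
Definition Bq x := Fr (x + 1) - Fr x - (fr (x + 1) + fr x) / 2.

Ltac nrm e1 e2 := let E := fresh in assert (E : e1 = e2) by ring; rewrite ?E in *; clear E.
Ltac normargs x :=
  nrm (x + 1 + 0) (x + 1); nrm (x + 0) x;
  nrm (x + 1 + 1) (x + 2); nrm (x + 1 + 2) (x + 3).

Lemma M1 x : 0 < x -> cI (x + 1) <= cI x.
Proof.
  intros Hx.
  assert (Hm := Hg_mono 1 (1/2 - x) (-1) (-2) (2 * x) 2 1 (- x - 1/2) (-1) 0 0 x Hx).
  assert (Hd : forall t, x <= t <= x + 1 ->
     0 <= dHg 1 (1/2 - x) (-1) (-2) (2 * x) 2 1 (- x - 1/2) (-1) 0 0 t).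
  { intros t Ht.
    replace (dHg 1 (1/2 - x) (-1) (-2) (2 * x) 2 1 (- x - 1/2) (-1) 0 0 t)
      with ((1 - al) * ((t - x + 1/2) * (psi t - psi (t + 1)) + psi (t + 1))).
    2:{ unfold dHg, ph, psi. normargs t. field. }
    assert (psi (t + 1) <= psi t) by (apply psi_dec; lra).
    assert (0 <= psi (t + 1)) by (apply psi_nonneg; lra).
    apply Rmult_le_pos; [lra|]. nra. }
  specialize (Hm Hd). unfold Hg in Hm. unfold cI.
  normargs x. normargs (x + 1). ring_simplify in Hm. ring_simplify. lra.
Qed.

Lemma M2 x : 0 < x -> cL (x + 1) <= cI x.
Proof.
  intros Hx. set (k := ph (x + 3/2)).
  assert (Hm := Hg_mono 1 (1/2 - x) (-1) (-2) (2 * x) 2 0 0 0 (k/2) (- k * (2 * x + 1) / 2) x Hx).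
  assert (Hd : forall t, x <= t <= x + 1 ->
     0 <= dHg 1 (1/2 - x) (-1) (-2) (2 * x) 2 0 0 0 (k/2) (- k * (2 * x + 1) / 2) t).
  { intros t Ht.
    replace (dHg 1 (1/2 - x) (-1) (-2) (2 * x) 2 0 0 0 (k/2) (- k * (2 * x + 1) / 2) t)
      with ((t - x + 1/2) * (ph t - ph (t + 1)) + (1/2 - (t - x)) * (ph (t + 1) - k)).
    2:{ unfold dHg. normargs t. field. }
    assert (ph (t + 1) <= ph t) by (apply ph_dec; lra).
    assert (0 <= (t - x + 1/2) * (ph t - ph (t + 1))) by (apply Rmult_le_pos; lra).
    destruct (Rle_dec (t - x) (1/2)).
    - assert (k <= ph (t + 1)) by (apply ph_dec; lra). nra.
    - assert (ph (t + 1) <= k) by (apply ph_dec; lra). nra. }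
  specialize (Hm Hd). unfold Hg in Hm. unfold cI, cL.
  normargs x. normargs (x + 1). normargs x. ring_simplify in Hm. ring_simplify. lra.
Qed.

Lemma M4 x : 0 < x -> ph (x + 1) <= cL x.
Proof.
  intros Hx. set (k := ph (x + 1)).
  assert (Hm := Hg_mono 1 (1/2 - x) (-1) 0 0 0 0 0 0 (- k / 2) (- k * (1/2 - x)) x Hx).
  assert (Hd : forall t, x <= t <= x + 1 ->
     0 <= dHg 1 (1/2 - x) (-1) 0 0 0 0 0 0 (- k / 2) (- k * (1/2 - x)) t).
  { intros t Ht.
    replace (dHg 1 (1/2 - x) (-1) 0 0 0 0 0 0 (- k / 2) (- k * (1/2 - x)) t)
      with ((t - x + 1/2) * (ph t - k)).
    2:{ unfold dHg. normargs t. field. }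
    assert (k <= ph t) by (apply ph_dec; lra).
    apply Rmult_le_pos; lra. }
  specialize (Hm Hd). unfold Hg in Hm. unfold cL. fold k.
  normargs x. normargs (x + 1). normargs x. ring_simplify in Hm. ring_simplify. lra.
Qed.

Lemma M3a x : 0 < x -> 0 <= Bq x.
Proof.
  intros Hx. set (k := ph (x + 1/2)).
  assert (Hm := Hg_mono (-1) (1/2 + x) 1 0 0 0 0 0 0 (k/2) (- k * (2 * x + 1) / 2) x Hx).
  assert (Hd : forall t, x <= t <= x + 1 ->
     0 <= dHg (-1) (1/2 + x) 1 0 0 0 0 0 0 (k/2) (- k * (2 * x + 1) / 2) t).
  { intros t Ht.
    replace (dHg (-1) (1/2 + x) 1 0 0 0 0 0 0 (k/2) (- k * (2 * x + 1) / 2) t)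
      with ((1/2 - (t - x)) * (ph t - k)).
    2:{ unfold dHg. normargs t. field. }
    destruct (Rle_dec (t - x) (1/2)).
    - assert (k <= ph t) by (apply ph_dec; lra). nra.
    - assert (ph t <= k) by (apply ph_dec; lra). nra. }
  specialize (Hm Hd). unfold Hg in Hm. unfold Bq.
  normargs x. normargs (x + 1). normargs x. ring_simplify in Hm. ring_simplify. lra.
Qed.

Lemma M3b x : 0 < x -> cI x <= fr (x + 1) - fr x.
Proof.
  intros Hx. set (k := ph (x + 1/2) - ph (x + 3/2)).
  assert (Hm := Hg_mono (-1) (1/2 + x) 1 1 (-1/2 - x) (-1) 0 0 0 (k/2) (- k * (2 * x + 1) / 2) x Hx).
  assert (Hd : forall t, x <= t <= x + 1 ->
     0 <= dHg (-1) (1/2 + x) 1 1 (-1/2 - x) (-1) 0 0 0 (k/2) (- k * (2 * x + 1) / 2) t).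
  { intros t Ht.
    replace (dHg (-1) (1/2 + x) 1 1 (-1/2 - x) (-1) 0 0 0 (k/2) (- k * (2 * x + 1) / 2) t)
      with ((1/2 - (t - x)) * ((1 - al) * (psi t - psi (x + 1/2)))).
    2:{ unfold dHg, k, ph, psi. normargs t. replace (x + 1/2 + 1) with (x + 3/2) by lra. field. }
    destruct (Rle_dec (t - x) (1/2)).
    - assert (psi (x + 1/2) <= psi t) by (apply psi_dec; lra).
      apply Rmult_le_pos; [lra|]. apply Rmult_le_pos; lra.
    - assert (psi t <= psi (x + 1/2)) by (apply psi_dec; lra).
      assert (0 <= (t - x - 1/2) * ((1 - al) * (psi (x + 1/2) - psi t))).
      { apply Rmult_le_pos; [lra|]. apply Rmult_le_pos; lra. }
      nra. }
  specialize (Hm Hd). unfold Hg in Hm. unfold cI.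
  normargs x. normargs (x + 1). normargs x. ring_simplify in Hm. ring_simplify. lra.
Qed.

Lemma M3c x : 0 < x -> fr (x + 1) - fr x <= ph x.
Proof.
  intros Hx. set (k := ph x).
  assert (Hm := Hg_mono 0 (-1) 0 0 0 0 0 0 0 0 k x Hx).
  assert (Hd : forall t, x <= t <= x + 1 -> 0 <= dHg 0 (-1) 0 0 0 0 0 0 0 0 k t).
  { intros t Ht.
    replace (dHg 0 (-1) 0 0 0 0 0 0 0 0 k t) with (k - ph t).
    2:{ unfold dHg. normargs t. field. }
    assert (ph t <= k) by (apply ph_dec; lra). lra. }
  specialize (Hm Hd). unfold Hg in Hm.
  normargs x. normargs (x + 1). normargs x. ring_simplify in Hm. ring_simplify. lra.
Qed.

Definition sg := 1 - al / 2.
Definition X (n : nat) := INR n - 1 + sg.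

Lemma X_pos n : (1 <= n)%nat -> 0 < X n.
Proof. intros H. unfold X, sg. apply le_INR in H. simpl in H. lra. Qed.

Lemma X_S n : X (S n) = X n + 1.
Proof. unfold X. rewrite S_INR. ring. Qed.

Lemma a_S n : (1 <= n)%nat -> a_coef al sg n = fr (X n + 1) - fr (X n).
Proof.
  intros H. destruct n; [lia|]. unfold a_coef, fr, X.
  replace (INR (S n) - 1 + sg + 1) with (INR (S n) + sg) by ring. reflexivity.
Qed.

Lemma b_S n : b_coef al sg n = Bq (X n).
Proof.
  unfold b_coef, Bq, Fr, fr, X.
  replace (INR n - 1 + sg + 1) with (INR n + sg) by ring. field. lra.
Qed.

Lemma fr_eq t : 0 < t -> fr t = t * Rpower t (- al).
Proof. intros H. unfold fr. replace (1 - al) with (1 + - al) by ring.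
  rewrite Rpower_plus, Rpower_1; auto. Qed.

Lemma coef_props j :
  let C := c_coef al sg j in
  (forall k, (k < j)%nat -> C (S k) <= C k) /\
  (1 - al) * Rpower (INR j + sg) (- al) <= C j /\
  (1 - sg) ^ 2 * C 0%nat <= sg ^ 2 * (C 0%nat - Chat C j 1).
Proof.
  intros C.
  assert (Hsg : 1/2 < sg <= 1) by (unfold sg; lra).
  assert (HP : 0 < Rpower sg (- al)) by apply pw_pos.
  destruct j as [|j'].
  - assert (HC : forall k, C k = fr sg) by (intros; unfold C, c_coef; simpl; reflexivity).
    rewrite fr_eq in HC by lra.
    split; [intros; lia|]. split.
    + rewrite HC. simpl INR. replace (0 + sg) with sg by ring. assert (1 - al <= sg) by (unfold sg; lra). nra.
    + unfold Chat. simpl Nat.leb. cbv iota. rewrite !HC. assert (0 < sg * Rpower sg (- al)) by nra. assert ((1 - sg) ^ 2 <= sg ^ 2) by nra. nra.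
  -
    assert (HC0 : C 0%nat = fr sg + Bq sg).
    { unfold C, c_coef. simpl Nat.eqb. cbv iota.
      rewrite b_S. unfold a_coef. replace (X 1) with sg by (unfold X; simpl; ring). reflexivity. }
    assert (HCi : forall k, (1 <= k)%nat -> (k < S j')%nat -> C k = cI (X k)).
    { intros k H1 H2. unfold C, c_coef. simpl Nat.eqb at 1. cbv iota.
      destruct k as [|k']; [lia|]. simpl Nat.eqb. cbv iota.
      replace (Nat.ltb (S k') (S j')) with true by (symmetry; apply Nat.ltb_lt; lia).
      rewrite a_S by lia. rewrite !b_S. replace (S k' + 1)%nat with (S (S k')) by lia.
      rewrite (X_S (S k')). set (x := X (S k')). unfold Bq, cI. replace (x + 1 + 1) with (x + 2) by ring. field. }
    assert (HCj : C (S j') = cL (X (S j'))).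
    { unfold C, c_coef. simpl Nat.eqb. cbv iota.
      replace (Nat.ltb (S j') (S j')) with false by (symmetry; apply Nat.ltb_ge; lia).
      rewrite a_S by lia. rewrite b_S. unfold Bq, cL. field. }
    assert (HC0low : sg * Rpower sg (- al) <= C 0%nat).
    { rewrite HC0. rewrite fr_eq by lra. assert (0 <= Bq sg) by (apply M3a; lra). lra. }
    assert (HC1 : C 1%nat <= (1 - al) * Rpower sg (- al)).
    { assert (E : fr (sg + 1) - fr sg <= ph sg) by (apply M3c; lra).
      unfold ph in E.
      assert (X1 : X 1 = sg) by (unfold X; simpl; ring).
      destruct j' as [|j''].
      + rewrite HCj. rewrite X1. assert (0 <= Bq sg) by (apply M3a; lra).
        unfold Bq, cL in *. lra.
      + rewrite HCi by lia. rewrite X1. assert (cI sg <= fr (sg + 1) - fr sg) by (apply M3b; lra). lra. }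
    split; [|split].
    + intros k Hk. destruct k as [|k'].
      * assert ((1 - al) <= sg) by (unfold sg; lra). nra.
      * destruct (Nat.eq_dec (S (S k')) (S j')) as [E|E].
        -- rewrite E, HCj, HCi by lia. rewrite <- E, X_S. apply M2. apply X_pos; lia.
        -- rewrite !HCi by lia. rewrite X_S. apply M1. apply X_pos; lia.
    + rewrite HCj. replace (INR (S j') + sg) with (X (S j') + 1) by (unfold X; ring).
      apply M4. apply X_pos; lia.
    + unfold Chat. replace (Nat.leb 1 (S j')) with true by (symmetry; apply Nat.leb_le; lia).
      assert (sg ^ 2 * C 1%nat <= (1 - al) * C 0%nat).
      { apply Rle_trans with (sg ^ 2 * ((1 - al) * Rpower sg (- al))).
        apply Rmult_le_compat_l; [nra|lra].
        apply Rle_trans with ((1 - al) * (sg * Rpower sg (- al))).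
        assert (0 <= (1 - al) * Rpower sg (- al)) by nra. assert (sg ^ 2 <= sg) by nra.
        replace ((1 - al) * (sg * Rpower sg (- al))) with (sg * ((1 - al) * Rpower sg (- al))) by ring.
        apply Rmult_le_compat_r; lra.
        apply Rmult_le_compat_l; lra. }
      replace ((1 - sg) ^ 2) with (sg ^ 2 - (1 - al)) by (unfold sg; field). nra.
Qed.
End Coef.

Lemma at_right0_intro (P : R -> Prop) d : 0 < d -> (forall a, 0 < a < d -> P a) -> at_right 0 P.
Proof.
  intros Hd H. exists (mkposreal d Hd). intros y Hy Hpos. apply H. split; auto.
  change (Rabs (y - 0) < d) in Hy. rewrite Rminus_0_r, Rabs_right in Hy; lra.
Qed.

Lemma lim_ge {F : (R -> Prop) -> Prop} {FF : ProperFilter F} (u : R -> R) L c :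
  filterlim u F (locally L) -> F (fun x => c <= u x) -> c <= L.
Proof.
  intros Hl Hc. destruct (Rle_dec c L) as [|Hn]; auto. exfalso.
  assert (He : 0 < c - L) by lra.
  assert (Hb : F (fun x => ball L (mkposreal _ He) (u x))).
  { apply Hl. exists (mkposreal _ He). auto. }
  destruct (Hierarchy.filter_ex _ (filter_and _ _ Hc Hb)) as [x [H1 H2]].
  change (Rabs (u x - L) < c - L) in H2. apply Rabs_def2 in H2. lra.
Qed.

Lemma lim_le {F : (R -> Prop) -> Prop} {FF : ProperFilter F} (u : R -> R) L c :
  filterlim u F (locally L) -> F (fun x => u x <= c) -> L <= c.
Proof.
  intros Hl Hc. destruct (Rle_dec L c) as [|Hn]; auto. exfalso.
  assert (He : 0 < L - c) by lra.
  assert (Hb : F (fun x => ball L (mkposreal _ He) (u x))).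
  { apply Hl. exists (mkposreal _ He). auto. }
  destruct (Hierarchy.filter_ex _ (filter_and _ _ Hc Hb)) as [x [H1 H2]].
  change (Rabs (u x - L) < L - c) in H2. apply Rabs_def2 in H2. lra.
Qed.

Lemma pw_small r y : 0 < r -> 0 < y -> forall a, 0 < a < Rpower y (/ r) -> Rpower a r < y.
Proof.
  intros Hr Hy a Ha.
  assert (E : Rpower (Rpower y (/ r)) r = y).
  { rewrite Rpower_mult. replace (/ r * r) with 1 by (field; lra). apply Rpower_1; auto. }
  rewrite <- E. apply Rlt_Rpower_l; auto.
Qed.

Lemma cont_pw r x : 0 < x -> continuous (fun t => Rpower t r) x.
Proof.
  intros H. apply (@ex_derive_continuous R_AbsRing R_NormedModule). exists (r * Rpower x (r - 1)).
  apply is_derive_Reals, derivable_pt_lim_power; auto.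
Qed.

Lemma pw_one r : Rpower 1 r = 1.
Proof. unfold Rpower. rewrite ln_1, Rmult_0_r. apply exp_0. Qed.

Section Gam.
Variable s : R.
Hypothesis Hs : 0 < s <= 2.

Definition gf t := Rpower t (s - 1) * exp (- t).

Lemma cont_gf x : 0 < x -> continuous gf x.
Proof.
  intros H. unfold gf. apply (continuous_mult (fun t => Rpower t (s - 1)) (fun t => exp (- t))).
  - apply cont_pw; auto.
  - apply (@ex_derive_continuous R_AbsRing R_NormedModule). auto_derive. auto.
Qed.

Lemma exRI_gf a b : 0 < a -> 0 < b -> ex_RInt gf a b.
Proof.
  intros Ha Hb. apply (@ex_RInt_continuous R_CompleteNormedModule). intros z Hz. apply cont_gf.
  apply Rlt_le_trans with (Rmin a b); [|lra]. apply Rmin_glb_lt; auto.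
Qed.

Lemma gf_nonneg t : 0 < t -> 0 <= gf t.
Proof. intros; unfold gf. apply Rmult_le_pos; left; [apply pw_pos| apply exp_pos]. Qed.

Lemma RI_pw a b : 0 < a -> 0 < b -> RInt (fun t => Rpower t (s - 1)) a b = (Rpower b s - Rpower a s) / s.
Proof.
  intros Ha Hb. apply is_RInt_unique.
  replace ((Rpower b s - Rpower a s) / s) with (minus (Rpower b s / s) (Rpower a s / s))
    by (unfold minus, plus, opp; simpl; field; lra).
  apply (is_RInt_derive (fun t => Rpower t s / s)).
  - intros x Hx. assert (0 < x) by (apply Rlt_le_trans with (Rmin a b); [apply Rmin_glb_lt|]; lra).
    assert (D := derivable_pt_lim_power x s H). apply is_derive_Reals in D.
    apply (is_derive_scal _ _ (/ s)) in D.
    replace (Rpower x (s - 1)) with (/ s * (s * Rpower x (s - 1))) by (field; lra).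
    eapply is_derive_ext; [|exact D]. intros t; simpl. unfold Rdiv; ring.
  - intros x Hx. apply cont_pw. apply Rlt_le_trans with (Rmin a b); [apply Rmin_glb_lt|]; lra.
Qed.

Lemma B0 a b : 0 < a <= b -> b <= 1 -> 0 <= RInt gf a b <= Rpower b s / s.
Proof.
  intros Hab Hb1. split.
  - apply RInt_ge_0; [lra| apply exRI_gf; lra|]. intros; apply gf_nonneg; lra.
  - apply Rle_trans with (RInt (fun t => Rpower t (s - 1)) a b).
    + apply RInt_le; [lra| apply exRI_gf; lra| |].
      * apply (@ex_RInt_continuous R_CompleteNormedModule). intros z Hz. apply cont_pw.
        apply Rlt_le_trans with (Rmin a b); [apply Rmin_glb_lt|]; lra.
      * intros x Hx. unfold gf. assert (0 < Rpower x (s - 1)) by apply pw_pos.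
        assert (exp (- x) <= 1). { rewrite <- exp_0. destruct (Req_dec x 0); [lra|].
          left; apply exp_increasing; lra. }
        nra.
    + rewrite RI_pw by lra. assert (0 < Rpower a s) by apply pw_pos.
      apply Rmult_le_compat_r; [left; apply Rinv_0_lt_compat; lra| lra].
Qed.


Lemma gf_le_exp t : 1 <= t -> gf t <= exp (- t / 2).
Proof.
  intros Ht. unfold gf.
  assert (H1 : Rpower t (s - 1) <= t).
  { rewrite <- (Rpower_1 t) at 2 by lra. apply Rle_Rpower; lra. }
  assert (H2 : t <= exp (t / 2)).
  { replace (t / 2) with (t / 4 + t / 4) by field. rewrite exp_plus.
    assert (1 + t / 4 <= exp (t / 4)) by apply exp_ineq1_le.
    assert (t <= (1 + t / 4) * (1 + t / 4)).
    { replace ((1 + t / 4) * (1 + t / 4)) with (t + (1 - t / 4) * (1 - t / 4)) by field.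
      assert (0 <= (1 - t / 4) * (1 - t / 4)) by apply Rle_0_sqr. lra. }
    assert ((1 + t / 4) * (1 + t / 4) <= exp (t / 4) * exp (t / 4)) by (apply Rmult_le_compat; lra). lra. }
  assert (E : exp (- t) = exp (- t / 2) * exp (- t / 2)) by (rewrite <- exp_plus; f_equal; field).
  assert (E2 : exp (t / 2) * exp (- t / 2) = 1) by (rewrite <- exp_plus, <- exp_0; f_equal; field).
  assert (0 < exp (- t)) by apply exp_pos. assert (0 < exp (- t / 2)) by apply exp_pos.
  assert (0 < Rpower t (s - 1)) by apply pw_pos.
  apply Rle_trans with (t * exp (- t)). apply Rmult_le_compat_r; lra.
  rewrite E. apply Rle_trans with (exp (t / 2) * exp (- t / 2) * exp (- t / 2)).
  rewrite <- Rmult_assoc. apply Rmult_le_compat_r; [lra|]. apply Rmult_le_compat_r; lra.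
  rewrite E2. lra.
Qed.

Lemma RI_exp2 a b : RInt (fun t => exp (- t / 2)) a b = 2 * (exp (- a / 2) - exp (- b / 2)).
Proof.
  apply is_RInt_unique.
  replace (2 * (exp (- a / 2) - exp (- b / 2))) with (minus (-2 * exp (- b / 2)) (-2 * exp (- a / 2)))
    by (unfold minus, plus, opp; simpl; ring).
  apply (is_RInt_derive (fun t => -2 * exp (- t / 2))).
  - intros x _. auto_derive; auto. unfold Rdiv. field.
  - intros x _. apply (@ex_derive_continuous R_AbsRing R_NormedModule). auto_derive. auto.
Qed.

Lemma B1 a b : 1 <= a <= b -> 0 <= RInt gf a b <= 2 * exp (- a / 2).
Proof.
  intros Hab. split.
  - apply RInt_ge_0; [lra| apply exRI_gf; lra|]. intros; apply gf_nonneg; lra.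
  - apply Rle_trans with (RInt (fun t => exp (- t / 2)) a b).
    + apply RInt_le; [lra| apply exRI_gf; lra| |].
      * apply (@ex_RInt_continuous R_CompleteNormedModule). intros z Hz.
        apply (@ex_derive_continuous R_AbsRing R_NormedModule). auto_derive. auto.
      * intros x Hx. apply gf_le_exp; lra.
    + rewrite RI_exp2. assert (0 < exp (- b / 2)) by apply exp_pos. lra.
Qed.

Definition Phi a := RInt gf a 1.
Definition Psi b := RInt gf 1 b.

Lemma Phi_diff a a' : 0 < a <= a' -> a' <= 1 -> Phi a - Phi a' = RInt gf a a'.
Proof.
  intros H1 H2. unfold Phi. rewrite <- (RInt_Chasles gf a a' 1) by (apply exRI_gf; lra).
  unfold plus; simpl. ring.
Qed.

Lemma Psi_diff b b' : 1 <= b <= b' -> Psi b' - Psi b = RInt gf b b'.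
Proof.
  intros H1. unfold Psi. rewrite <- (RInt_Chasles gf 1 b b') by (apply exRI_gf; lra).
  unfold plus; simpl. ring.
Qed.

Lemma Phi_lim : exists L, filterlim Phi (at_right 0) (locally L).
Proof.
  set (F := filtermap Phi (at_right 0)).
  assert (FF : ProperFilter F) by (apply filtermap_proper_filter; apply at_right_proper_filter).
  assert (Hc : forall eps : posreal, exists x : R, F (ball x eps)).
  { intros eps. set (y := s * eps / 2).
    assert (Hy : 0 < y) by (unfold y; destruct eps; simpl; nra).
    set (d := Rmin 1 (Rpower y (/ s))).
    assert (Hd : 0 < d) by (apply Rmin_glb_lt; [lra| apply pw_pos]).
    assert (Hds : Rpower d s <= y).
    { destruct (Rle_lt_or_eq_dec _ _ (Rmin_r 1 (Rpower y (/ s)))) as [Hl|He].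
      - left. apply pw_small; [lra|auto|]. split; [exact Hd| exact Hl].
      - unfold d. rewrite He, Rpower_mult. replace (/ s * s) with 1 by (field; lra).
        rewrite Rpower_1; lra. }
    exists (Phi d). unfold F, filtermap.
    apply (at_right0_intro _ d Hd). intros a Ha.
    change (Rabs (Phi a - Phi d) < eps).
    assert (Hd1 : d <= 1) by apply Rmin_l.
    rewrite Phi_diff by lra. destruct (B0 a d) as [B0a B0b]; [lra|lra|].
    rewrite Rabs_right by lra.
    apply Rle_lt_trans with (Rpower d s / s); auto.
    apply Rle_lt_trans with (y / s). apply Rmult_le_compat_r; [left; apply Rinv_0_lt_compat; lra| auto].
    unfold y. destruct eps; simpl. apply Rmult_lt_reg_r with s; [lra|]. replace (s * pos / 2 / s * s) with (pos * s / 2) by (field; lra). nra. }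
  exists (R_complete_lim F). intros P [eps HP].
  apply (filter_imp (ball (R_complete_lim F) eps)); auto.
  apply R_complete; auto.
Qed.

Lemma Psi_lim : exists L, filterlim Psi (Rbar_locally p_infty) (locally L).
Proof.
  set (F := filtermap Psi (Rbar_locally p_infty)).
  assert (FF : ProperFilter F) by (apply filtermap_proper_filter; apply Rbar_locally_filter).
  assert (Hc : forall eps : posreal, exists x : R, F (ball x eps)).
  { intros eps. set (B := Rmax 1 (- 2 * ln (eps / 4))).
    assert (HB : 1 <= B) by apply Rmax_l.
    assert (HeB : 2 * exp (- B / 2) < eps).
    { assert (Hep : 0 < eps / 4) by (destruct eps; simpl; lra).
      assert (- B / 2 <= ln (eps / 4)).
      { assert (- 2 * ln (eps / 4) <= B) by apply Rmax_r. lra. }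
      assert (exp (- B / 2) <= eps / 4).
      { rewrite <- (exp_ln (eps / 4)) by auto. destruct H; [left; apply exp_increasing; auto| rewrite H; lra]. }
      destruct eps; simpl in *; lra. }
    exists (Psi B). unfold F, filtermap. exists B. intros b Hb.
    change (Rabs (Psi b - Psi B) < eps).
    rewrite Psi_diff by lra. destruct (B1 B b) as [B1a B1b]; [lra|].
    rewrite Rabs_right by lra. lra. }
  exists (R_complete_lim F). intros P [eps HP].
  apply (filter_imp (ball (R_complete_lim F) eps)); auto.
  apply R_complete; auto.
Qed.

Lemma gen0 L : filterlim Phi (at_right 0) (locally L) -> is_RInt_gen gf (at_right 0) (at_point 1) L.
Proof.
  intros HL P HP. unfold filtermapi.
  apply (Filter_prod _ _ _ (fun a => (0 < a < 1) /\ P (Phi a)) (fun b => b = 1)).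
  - apply filter_and. apply (at_right0_intro _ 1); [lra| auto]. apply HL. auto.
  - reflexivity.
  - intros a b [Ha HPa] Hb. simpl. subst b. exists (Phi a). split; auto.
    apply (@RInt_correct R_CompleteNormedModule). apply exRI_gf; lra.
Qed.

Lemma genInf L : filterlim Psi (Rbar_locally p_infty) (locally L) ->
  is_RInt_gen gf (at_point 1) (Rbar_locally p_infty) L.
Proof.
  intros HL P HP. unfold filtermapi.
  apply (Filter_prod _ _ _ (fun a => a = 1) (fun b => 1 < b /\ P (Psi b))).
  - reflexivity.
  - apply filter_and. exists 1; auto. apply HL. auto.
  - intros a b Ha [Hb HPb]. simpl. subst a. exists (Psi b). split; auto.
    apply (@RInt_correct R_CompleteNormedModule). apply exRI_gf; lra.
Qed.

Lemma Gamma_split L1 L2 : filterlim Phi (at_right 0) (locally L1) ->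
  filterlim Psi (Rbar_locally p_infty) (locally L2) -> Gamma s = L1 + L2.
Proof.
  intros H1 H2. unfold Gamma.
  apply (@is_RInt_gen_unique R_CompleteNormedModule (at_right 0) (Rbar_locally p_infty)
    (Proper_StrongProper _ (at_right_proper_filter 0)) (Proper_StrongProper _ (Rbar_locally_filter p_infty)) gf).
  apply (is_RInt_gen_Chasles gf 1 L1 L2); [apply gen0| apply genInf]; auto.
Qed.

Lemma L2_nonneg L2 : filterlim Psi (Rbar_locally p_infty) (locally L2) -> 0 <= L2.
Proof.
  intros H. apply (lim_ge Psi L2 0 H). simpl. exists 1. intros b Hb.
  unfold Psi. apply RInt_ge_0; [lra| apply exRI_gf; lra|]. intros; apply gf_nonneg; lra.
Qed.
End Gam.

Lemma bern al t : 0 < al < 1 -> 0 < t -> Rpower t (1 - al) <= al + (1 - al) * t.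
Proof.
  intros Hal Ht.
  set (H := fun t => al + (1 - al) * t - Rpower (t + 0) (1 - al)).
  set (dH := fun t => (1 - al) * 1 - (1 - al) * Rpower (t + 0) (1 - al - 1)).
  assert (HD : forall x, 0 < x -> is_derive H x (dH x)).
  { intros x Hx. unfold H, dH.
    apply (is_derive_minus (fun t => al + (1 - al) * t) (fun t => Rpower (t + 0) (1 - al))).
    - replace ((1 - al) * 1) with (0 + (1 - al) * 1) by ring. apply D_add; [apply D_cst|].
      apply (is_derive_scal (fun t => t)); apply D_id.
    - apply D_pw; lra. }
  assert (H1 : H 1 = 0) by (unfold H; rewrite Rplus_0_r, pw_one; ring).
  replace (1 - al - 1) with (- al) in * by ring.
  assert (Hfin : 0 <= H t).
  { destruct (Rle_dec 1 t).
    - rewrite <- H1. apply (mono_deriv H dH); [lra| intros; apply HD; lra|].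
      intros x Hx. unfold dH. rewrite Rplus_0_r.
      assert (Rpower x (- al) <= Rpower 1 (- al)) by (apply pw_dec; lra).
      rewrite pw_one in H0. replace (1 - al - 1) with (- al) by ring. nra.
    - set (mH := fun t => - H t). set (mdH := fun t => - dH t).
      assert (mH t <= mH 1).
      { apply (mono_deriv mH mdH); [lra| |].
        - intros x Hx. unfold mH, mdH. apply (is_derive_opp H). apply HD; lra.
        - intros x Hx. unfold mdH, dH. rewrite Rplus_0_r.
          assert (Rpower 1 (- al) <= Rpower x (- al)) by (apply pw_dec; lra).
          rewrite pw_one in H0. replace (1 - al - 1) with (- al) by ring. nra. }
      unfold mH in H0. lra. }
  unfold H in Hfin. rewrite Rplus_0_r in Hfin. lra.
Qed.

Lemma exp_m1 : 1 / 3 <= exp (- 1).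
Proof.
  replace (- 1) with (- (1)) by ring. rewrite exp_Ropp. assert (exp 1 <= 3) by apply exp_le_3. assert (0 < exp 1) by apply exp_pos.
  replace (1 / 3) with (/ 3) by field. apply Rinv_le_contravar; lra.
Qed.

Lemma G2_bounds al : 0 < al < 1 -> 0 < Gamma (2 - al) <= 1.
Proof.
  intros Hal. set (s := 2 - al).
  assert (Hs : 0 < s <= 2) by (unfold s; lra).
  destruct (Phi_lim s Hs) as [L1 HL1]. destruct (Psi_lim s Hs) as [L2 HL2].
  rewrite (Gamma_split s L1 L2 HL1 HL2).
  assert (HL2p := L2_nonneg s L2 HL2).
  assert (Hgf : forall t, 0 < t -> gf s t = Rpower t (1 - al) * exp (- t))
    by (intros; unfold gf, s; f_equal; f_equal; ring).
  set (Gp := fun t => - (al + (1 - al) * (t + 1)) * exp (- t)).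
  assert (RIg : forall a b, RInt (fun t => (al + (1 - al) * t) * exp (- t)) a b = Gp b - Gp a).
  { intros a b. apply is_RInt_unique.
    replace (Gp b - Gp a) with (minus (Gp b) (Gp a)) by (unfold minus, plus, opp; simpl; ring).
    apply (is_RInt_derive Gp).
    - intros x _. unfold Gp. auto_derive; auto. ring.
    - intros x _. apply (@ex_derive_continuous R_AbsRing R_NormedModule). auto_derive. auto. }
  assert (exg : forall a b, ex_RInt (fun t => (al + (1 - al) * t) * exp (- t)) a b).
  { intros a b. apply (@ex_RInt_continuous R_CompleteNormedModule). intros z _.
    apply (@ex_derive_continuous R_AbsRing R_NormedModule). auto_derive. auto. }
  assert (Hcmp : forall a b, 0 < a <= b -> RInt (gf s) a b <= Gp b - Gp a).
  { intros a b Hab. rewrite <- RIg. apply RInt_le; [lra| apply exRI_gf; lra| auto|].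
    intros x Hx. rewrite Hgf by lra. apply Rmult_le_compat_r; [left; apply exp_pos|].
    apply bern; lra. }
  assert (HGp1 : forall a, 0 <= a -> - Gp a <= 1).
  { intros a Ha. unfold Gp. assert (1 + a <= exp a) by apply exp_ineq1_le.
    assert (E : exp a * exp (- a) = 1) by (rewrite <- exp_plus; replace (a + - a) with 0 by ring; apply exp_0).
    assert (0 < exp (- a)) by apply exp_pos.
    replace (- (- (al + (1 - al) * (a + 1)) * exp (- a))) with ((al + (1 - al) * (a + 1)) * exp (- a)) by ring.
    apply Rle_trans with ((1 + a) * exp (- a)); [apply Rmult_le_compat_r; nra|].
    rewrite <- E. apply Rmult_le_compat_r; lra. }
  assert (HGp0 : forall b, 0 <= b -> Gp b <= 0).
  { intros b Hb. unfold Gp. assert (0 < exp (- b)) by apply exp_pos.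
    assert (0 <= (al + (1 - al) * (b + 1)) * exp (- b)) by (apply Rmult_le_pos; nra). lra. }
  assert (U1 : L1 <= Gp 1 + 1).
  { apply (lim_le (Phi s) L1 _ HL1). apply (at_right0_intro _ 1); [lra|].
    intros a Ha. unfold Phi. assert (H := Hcmp a 1 ltac:(lra)). assert (H' := HGp1 a ltac:(lra)). lra. }
  assert (U2 : L2 <= - Gp 1).
  { apply (lim_le (Psi s) L2 _ HL2). simpl. exists 1. intros b Hb.
    unfold Psi. assert (H := Hcmp 1 b ltac:(lra)). assert (H' := HGp0 b ltac:(lra)). lra. }
  assert (Lw : 1 / 12 <= L1).
  { apply (lim_ge (Phi s) L1 _ HL1). apply (at_right0_intro _ (1/2)); [lra|].
    intros a Ha. unfold Phi.
    rewrite <- (RInt_Chasles (gf s) a (1/2) 1) by (apply exRI_gf; lra).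
    assert (0 <= RInt (gf s) a (1/2)).
    { apply RInt_ge_0; [lra| apply exRI_gf; lra|]. intros; apply gf_nonneg; lra. }
    assert (1 / 12 <= RInt (gf s) (1/2) 1).
    { apply Rle_trans with (RInt (fun _ => 1/6) (1/2) 1).
      - rewrite RInt_const. unfold scal; simpl; unfold mult; simpl. lra.
      - apply RInt_le; [lra| |apply exRI_gf; lra|].
        + apply (@ex_RInt_continuous R_CompleteNormedModule). intros; apply continuous_const.
        + intros x Hx. rewrite Hgf by lra. assert (Ef := fr_eq al x ltac:(lra)); unfold fr in Ef; rewrite Ef.
          assert (Rpower 1 (- al) <= Rpower x (- al)) by (apply pw_dec; lra). rewrite pw_one in H0.
          assert (exp (- 1) <= exp (- x)).
          { destruct (Req_dec x 1) as [->|]; [lra|]. left; apply exp_increasing; lra. }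
          assert (HE := exp_m1). assert (x <= x * Rpower x (- al)) by nra. nra. }
    unfold plus; simpl. lra. }
  lra.
Qed.

Lemma G1_bound al : 0 < al < 1 -> 1 / (2 * (1 - al)) <= Gamma (1 - al).
Proof.
  intros Hal. set (s := 1 - al).
  assert (Hs : 0 < s <= 2) by (unfold s; lra).
  destruct (Phi_lim s Hs) as [L1 HL1]. destruct (Psi_lim s Hs) as [L2 HL2].
  rewrite (Gamma_split s L1 L2 HL1 HL2).
  assert (HL2p := L2_nonneg s L2 HL2).
  set (K := fun t => Rpower t (1 - al) / (1 - al) - Rpower t (2 - al) / (2 - al)).
  assert (RIK : forall a b, 0 < a -> 0 < b ->
     RInt (fun t => Rpower t (- al) - Rpower t (1 - al)) a b = K b - K a).
  { intros a b Ha Hb. apply is_RInt_unique.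
    replace (K b - K a) with (minus (K b) (K a)) by (unfold minus, plus, opp; simpl; ring).
    apply (is_RInt_derive K).
    - intros x Hx. assert (0 < x) by (apply Rlt_le_trans with (Rmin a b); [apply Rmin_glb_lt|]; lra).
      unfold K.
      apply (is_derive_minus (fun t => Rpower t (1 - al) / (1 - al)) (fun t => Rpower t (2 - al) / (2 - al))).
      + assert (D := derivable_pt_lim_power x (1 - al) H). apply is_derive_Reals in D.
        apply (is_derive_scal _ _ (/ (1 - al))) in D.
        replace (Rpower x (- al)) with (/ (1 - al) * ((1 - al) * Rpower x (1 - al - 1)))
          by (replace (1 - al - 1) with (- al) by ring; field; lra).
        eapply is_derive_ext; [|exact D]. intros t; simpl. unfold Rdiv; ring.
      + assert (D := derivable_pt_lim_power x (2 - al) H). apply is_derive_Reals in D.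
        apply (is_derive_scal _ _ (/ (2 - al))) in D.
        replace (Rpower x (1 - al)) with (/ (2 - al) * ((2 - al) * Rpower x (2 - al - 1)))
          by (replace (2 - al - 1) with (1 - al) by ring; field; lra).
        eapply is_derive_ext; [|exact D]. intros t; simpl. unfold Rdiv; ring.
    - intros x Hx. assert (0 < x) by (apply Rlt_le_trans with (Rmin a b); [apply Rmin_glb_lt|]; lra).
      apply (continuous_minus (fun t => Rpower t (- al)) (fun t => Rpower t (1 - al))); apply cont_pw; auto. }
  set (y := al / (2 * (2 - al))).
  assert (Hy : 0 < y) by (unfold y; apply Rdiv_lt_0_compat; lra).
  assert (Lw : 1 / (2 * (1 - al)) <= L1).
  { apply (lim_ge (Phi s) L1 _ HL1).
    apply (at_right0_intro _ (Rmin 1 (Rpower y (/ (1 - al))))); [apply Rmin_glb_lt; [lra| apply pw_pos]|].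
    intros a Ha.
    assert (Ha1 : a < 1) by (apply Rlt_le_trans with (Rmin 1 (Rpower y (/ (1 - al)))); [lra| apply Rmin_l]).
    assert (Hay : Rpower a (1 - al) < y).
    { apply pw_small; [lra| auto|]. split; [lra|].
      apply Rlt_le_trans with (Rmin 1 (Rpower y (/ (1 - al)))); [lra| apply Rmin_r]. }
    unfold Phi.
    assert (Hlow : K 1 - K a <= RInt (gf s) a 1).
    { rewrite <- RIK by lra. apply RInt_le; [lra| | apply exRI_gf; lra|].
      - apply (@ex_RInt_continuous R_CompleteNormedModule). intros z Hz.
        assert (0 < z) by (apply Rlt_le_trans with (Rmin a 1); [apply Rmin_glb_lt|]; lra).
        apply (continuous_minus (fun t => Rpower t (- al)) (fun t => Rpower t (1 - al))); apply cont_pw; auto.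
      - intros x Hx. unfold gf, s. replace (1 - al - 1) with (- al) by ring.
        assert (Ef := fr_eq al x ltac:(lra)); unfold fr in Ef; rewrite Ef.
        assert (1 - x <= exp (- x)) by (replace (1 - x) with (1 + - x) by ring; apply exp_ineq1_le).
        assert (0 < Rpower x (- al)) by apply pw_pos. nra. }
    assert (HK1 : K 1 = 1 / ((1 - al) * (2 - al))) by (unfold K; rewrite !pw_one; field; lra).
    assert (HKa : K a <= Rpower a (1 - al) / (1 - al)).
    { unfold K. assert (0 < Rpower a (2 - al)) by apply pw_pos.
      assert (0 < Rpower a (2 - al) / (2 - al)) by (apply Rdiv_lt_0_compat; lra). lra. }
    assert (Rpower a (1 - al) / (1 - al) <= y / (1 - al)).
    { apply Rmult_le_compat_r; [left; apply Rinv_0_lt_compat; lra| lra]. }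
    assert (E : 1 / ((1 - al) * (2 - al)) - y / (1 - al) = 1 / (2 * (1 - al))).
    { unfold y. field; lra. }
    lra. }
  unfold s. lra.
Qed.

Lemma sumR_shift N F : (1 <= N)%nat -> sumR 1 N F = sm (N - 1) (fun k => F (S k)).
Proof.
  intros HN. rewrite sumR_sm by lia. destruct N as [|n]; [lia|].
  replace (S n - 1)%nat with n by lia. clear HN.
  induction n; simpl; [ring|]. simpl in IHn. rewrite <- IHn. ring.
Qed.

Lemma sbp n (v A : nat -> R) :
  sm n (fun k => v (S k) * (A (S (S k)) - A (S k))) =
  v n * A (S n) - v 0%nat * A 1%nat - sm n (fun k => (v (S k) - v k) * A (S k)).
Proof. induction n; simpl; [ring|]. rewrite IHn. ring. Qed.

Lemma cs_step m p (v : nat -> R) :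
  (v (m + p)%nat - v m) ^ 2 <= INR p * (sm (m + p) (fun k => (v (S k) - v k) ^ 2) - sm m (fun k => (v (S k) - v k) ^ 2)).
Proof.
  set (D := fun k => (v (S k) - v k) ^ 2). induction p.
  - rewrite Nat.add_0_r. simpl. lra.
  - replace (m + S p)%nat with (S (m + p)) by lia. simpl sm. rewrite S_INR.
    set (A := v (m + p)%nat - v m). set (dl := v (S (m + p)) - v (m + p)%nat).
    set (Sm := sm (m + p) D - sm m D).
    replace (v (S (m + p)) - v m) with (A + dl) by (unfold A, dl; ring).
    assert (HD : D (m + p)%nat = dl ^ 2) by reflexivity.
    assert (HS : 0 <= Sm).
    { unfold Sm. clear IHp A dl HD. induction p. rewrite Nat.add_0_r; lra.
      replace (m + S p)%nat with (S (m + p)) by lia. simpl. unfold D at 2.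
      assert (0 <= (v (S (m + p)) - v (m + p)%nat) ^ 2) by apply pow2_ge_0. lra. }
    assert (Hp : 0 <= INR p) by apply pos_INR.
    replace (sm (m + p) D + D (m + p)%nat - sm m D) with (Sm + dl ^ 2) by (unfold Sm; rewrite HD; ring).
    fold A in IHp. fold Sm in IHp.
    assert (0 <= (INR p * dl - A) ^ 2) by apply pow2_ge_0.
    destruct (Req_dec (INR p) 0) as [Hp0|Hp0].
    + rewrite Hp0 in IHp. assert (A ^ 2 <= 0) by lra. assert (A = 0) by nra. subst; nra.
    + assert (0 < INR p) by lra.
      assert (INR p * ((INR p + 1) * (Sm + dl ^ 2) - (A + dl) ^ 2) >= 0) by nra.
      nra.
Qed.

Lemma poincare n (v : nat -> R) : v 0%nat = 0 -> v (S n) = 0 ->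
  let D := fun k => (v (S k) - v k) ^ 2 in
  sm n (fun k => v (S k) ^ 2) <= INR (S n) ^ 2 / 4 * sm (S n) D.
Proof.
  intros H0 HN D.
  assert (HDn : forall m, 0 <= sm m D).
  { intros m. apply sm_nonneg. intros; apply pow2_ge_0. }
  assert (Hpt : forall k, (k < n)%nat -> v (S k) ^ 2 <= INR (S n) / 4 * sm (S n) D).
  { intros k Hk. set (i := S k).
    assert (C1 := cs_step 0 i v). fold D in C1. rewrite Nat.add_0_l, H0, Rminus_0_r in C1.
    change (sm 0 D) with 0 in C1.
    assert (C2 := cs_step i (S n - i) v). fold D in C2.
    replace (i + (S n - i))%nat with (S n) in C2 by (unfold i; lia).
    rewrite HN in C2. rewrite minus_INR in C2 by (unfold i; lia).
    assert (Hi : 0 <= INR i) by apply pos_INR.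
    assert (Hin : INR i <= INR (S n)) by (apply le_INR; unfold i; lia).
    replace (sm i D - 0) with (sm i D) in C1 by ring.
    set (S1 := sm i D) in *. set (S2 := sm (S n) D) in *.
    set (x := v i) in *. set (NN := INR (S n)) in *.
    assert (HNpos : 0 < NN) by (unfold NN; apply lt_0_INR; lia).
    assert (NN * x ^ 2 <= INR i * (NN - INR i) * S2).
    { assert ((NN - INR i) * x ^ 2 <= (NN - INR i) * (INR i * S1)) by (apply Rmult_le_compat_l; lra).
      assert (INR i * x ^ 2 <= INR i * ((NN - INR i) * (S2 - S1))).
      { apply Rmult_le_compat_l; auto. replace ((0 - x) ^ 2) with (x ^ 2) in C2 by ring. lra. }
      nra. }
    assert (INR i * (NN - INR i) <= NN ^ 2 / 4).
    { replace (NN ^ 2 / 4) with (INR i * (NN - INR i) + (NN / 2 - INR i) ^ 2) by field.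
      assert (0 <= (NN / 2 - INR i) ^ 2) by apply pow2_ge_0. lra. }
    assert (0 <= S2) by (unfold S2; auto).
    apply Rmult_le_reg_l with NN; auto.
    apply Rle_trans with (INR i * (NN - INR i) * S2); auto.
    replace (NN * (NN / 4 * S2)) with (NN ^ 2 / 4 * S2) by field.
    apply Rmult_le_compat_r; auto. }
  apply Rle_trans with (sm n (fun _ => INR (S n) / 4 * sm (S n) D)).
  - apply sm_le; auto.
  - rewrite sm_const. assert (0 <= sm (S n) D) by auto.
    assert (INR n <= INR (S n)) by (apply le_INR; lia). assert (0 <= INR n) by apply pos_INR.
    replace (INR (S n) ^ 2 / 4 * sm (S n) D) with (INR (S n) * (INR (S n) / 4 * sm (S n) D)) by field.
    apply Rmult_le_compat_r; auto. apply Rmult_le_pos; [|auto]. assert (0 <= INR (S n)) by apply pos_INR. lra.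
Qed.

Lemma maxR_ge M (g : nat -> R) jj : (1 <= jj <= M)%nat -> g jj <= maxR M g.
Proof.
  intros H. unfold maxR. assert (Hin : In jj (seq 1 M)) by (apply in_seq; lia).
  induction (seq 1 M) as [|a l IH]; [destruct Hin|].
  simpl. destruct Hin as [->|Hin]; [apply Rmax_l|]. apply Rle_trans with (fold_right Rmax 0 (map g l)); [auto| apply Rmax_r].
Qed.

Lemma maxR_nonneg M (g : nat -> R) : 0 <= maxR M g.
Proof.
  unfold maxR. induction (seq 1 M) as [|a l IH]; simpl; [lra|].
  apply Rle_trans with (fold_right Rmax 0 (map g l)); [auto| apply Rmax_r].
Qed.

Lemma sm_lin n c (A B : nat -> R) : sm n (fun k => c * (A k - B k)) = c * (sm n A - sm n B).
Proof. induction n; simpl; [ring|]. rewrite IHn. ring. Qed.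

Theorem theorem3
  (alpha l T c1 : R) (N M : nat)
  (k q f : R -> R -> R) (u0 : R -> R) (y : nat -> nat -> R) :
  0 < alpha < 1 -> 0 < l -> 0 < T -> (1 <= N)%nat -> (1 <= M)%nat ->
  0 < c1 ->
  cont_on_rect l T k -> cont_on_rect l T q -> cont_on_rect l T f ->
  (forall x t, rect l T (x, t) -> c1 <= k x t) ->
  (forall x t, rect l T (x, t) -> 0 <= q x t) ->
  let sigma := 1 - alpha / 2 in
  let h := l / INR N in
  let tau := T / INR M in
  let tsig := fun j : nat => (INR j + sigma) * tau in
  let a := fun j i : nat => k ((INR i - 1 / 2) * h) (tsig j) in   (* a_i^{j+1} *)
  let d := fun j i : nat => q (INR i * h) (tsig j) in             (* d_i^{j+1} *)
  let phi := fun j i : nat => f (INR i * h) (tsig j) in           (* phi_i^{j+1} *)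
  let ysig := fun j i : nat => sigma * y (S j) i + (1 - sigma) * y j i in
  let Lam := fun j i : nat =>
    (a j (S i) * ysig j (S i) - (a j (S i) + a j i) * ysig j i + a j i * ysig j (i - 1)%nat)
      / (h * h) - d j i * ysig j i in
  (forall j i, (j <= M - 1)%nat -> (1 <= i <= N - 1)%nat ->
     frac_deriv alpha sigma tau y j i = Lam j i + phi j i) ->
  (forall j, (j <= M)%nat -> y j 0%nat = 0 /\ y j N = 0) ->
  (forall i, (1 <= i <= N - 1)%nat -> y 0%nat i = u0 (INR i * h)) ->
  forall j, (j <= M - 1)%nat ->
    norm0sq N h (y (S j)) <=
    norm0sq N h (y 0%nat)
    + l ^ 2 * Rpower T alpha * Gamma (1 - alpha) / (4 * c1)
      * maxR M (fun jj => norm0sq N h (phi (jj - 1)%nat)).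
Proof.
  intros Hal Hl HT HN HM Hc1 _ _ _ Hk Hq sigma h tau tsig a d phi ysig Lam Hsch Hbd Hinit j0 Hj0.
  assert (HNp : 0 < INR N) by (apply lt_0_INR; lia).
  assert (HMp : 0 < INR M) by (apply lt_0_INR; lia).
  assert (Hh : 0 < h) by (unfold h; apply Rdiv_lt_0_compat; lra).
  assert (Htau : 0 < tau) by (unfold tau; apply Rdiv_lt_0_compat; lra).
  assert (HhN : h * INR N = l) by (unfold h; field; lra).
  assert (HtM : tau * INR M = T) by (unfold tau; field; lra).
  assert (Hsig : 1/2 < sigma < 1) by (unfold sigma; lra).
  destruct (G2_bounds alpha Hal) as [G2p G2le].
  assert (G1b := G1_bound alpha Hal).
  set (G2 := Gamma (2 - alpha)) in *. set (G1 := Gamma (1 - alpha)) in *.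
  set (Kc := Rpower tau (1 - alpha) / G2 * / tau).
  assert (HKc : 0 < Kc).
  { unfold Kc. assert (0 < Rpower tau (1 - alpha)) by apply pw_pos.
    apply Rmult_lt_0_compat; [apply Rdiv_lt_0_compat; auto| apply Rinv_0_lt_compat; auto]. }
  set (P := l ^ 2 / 4).
  assert (HP : 0 < P) by (unfold P; nra).
  set (Fm := maxR M (fun jj => norm0sq N h (phi (jj - 1)%nat))).
  assert (HFm : 0 <= Fm) by apply maxR_nonneg.
  set (g := fun n => norm0sq N h (y n)).
  set (Bs := P / (2 * c1) * Fm / Kc).
  assert (HBs : 0 <= Bs).
  { unfold Bs. apply Rmult_le_pos; [|left; apply Rinv_0_lt_compat; auto].
    apply Rmult_le_pos; auto. apply Rdiv_le_0_compat; lra. }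
  set (cm := (1 - alpha) * Rpower (INR M) (- alpha)).
  assert (Hcm : 0 < cm) by (unfold cm; apply Rmult_lt_0_compat; [lra| apply pw_pos]).
  set (CC := fun jj kk => c_coef alpha sigma jj kk).
  assert (Hcoef : forall jj, let C := CC jj in
    (forall kk, (kk < jj)%nat -> C (S kk) <= C kk) /\
    (1 - alpha) * Rpower (INR jj + sigma) (- alpha) <= C jj /\
    (1 - sigma) ^ 2 * C 0%nat <= sigma ^ 2 * (C 0%nat - Chat C jj 1))
    by (intros jj; exact (coef_props alpha Hal jj)).
  assert (Henergy : forall jj, (jj <= M - 1)%nat ->
     sum_f_R0 (fun r => CC jj (jj - r)%nat * (g (S r) - g r)) jj <= Bs).
  { intros jj Hjj.
    destruct (Hcoef jj) as [HC1 [HC2 HC3]].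
    set (n := (N - 1)%nat).
    assert (HNn : N = S n) by (unfold n; lia).
    destruct (Hbd jj ltac:(lia)) as [Hy0a HyNa].
    destruct (Hbd (S jj) ltac:(lia)) as [Hy0b HyNb].
    assert (Hv0 : ysig jj 0%nat = 0) by (unfold ysig; rewrite Hy0a, Hy0b; ring).
    assert (HvN : ysig jj (S n) = 0) by (unfold ysig; rewrite <- HNn, HyNa, HyNb; ring).
    set (L1 := fun i => sum_f_R0 (fun r => CC jj (jj - r)%nat * (y (S r) i - y r i)) jj).
    set (L2 := fun i => sum_f_R0 (fun r => CC jj (jj - r)%nat * (y (S r) i * y (S r) i - y r i * y r i)) jj).
    assert (Hfd : forall i, frac_deriv alpha sigma tau y jj i = Kc * L1 i).
    { intros i. unfold frac_deriv, Kc, L1, CC.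
      assert (E : sum_f_R0 (fun s => c_coef alpha sigma jj (jj - s) * ((y (S s) i - y s i) / tau)) jj
                = / tau * sum_f_R0 (fun r => c_coef alpha sigma jj (jj - r) * (y (S r) i - y r i)) jj).
      { rewrite scal_sum. apply sum_eq; intros; unfold Rdiv; ring. }
      rewrite E. change (Gamma (2 - alpha)) with G2. unfold Rdiv. ring. }
    assert (HES : forall i, / 2 * L2 i <= ysig jj i * L1 i).
    { assert (HC2' : 0 <= CC jj jj).
      { apply Rle_trans with ((1 - alpha) * Rpower (INR jj + sigma) (- alpha)); auto.
        apply Rmult_le_pos; [lra| left; apply pw_pos]. }
      intros i. exact (energy_scalar (CC jj) jj sigma (fun r => y r i) HC1 HC2' HC3). }
    assert (Hsumg : sum_f_R0 (fun r => CC jj (jj - r)%nat * (g (S r) - g r)) jj = sm n (fun kk => h * L2 (S kk))).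
    { unfold g, norm0sq.
      transitivity (sum_f_R0 (fun r => sm n (fun kk => CC jj (jj - r)%nat *
          (h * (y (S r) (S kk) * y (S r) (S kk)) - h * (y r (S kk) * y r (S kk))))) jj).
      - apply sum_eq; intros r _. rewrite !sumR_shift by lia. fold n. rewrite sm_lin.
        f_equal. f_equal; apply sm_ext; intros; ring.
      - rewrite <- (sm_exch n jj (fun r kk => CC jj (jj - r)%nat *
          (h * (y (S r) (S kk) * y (S r) (S kk)) - h * (y r (S kk) * y r (S kk))))).
        apply sm_ext; intros kk _. unfold L2. rewrite scal_sum. apply sum_eq; intros; ring.
      }
    set (Rhs := sm n (fun kk => h * ysig jj (S kk) * (Lam jj (S kk) + phi jj (S kk)))).
    set (Sg := sum_f_R0 (fun r => CC jj (jj - r)%nat * (g (S r) - g r)) jj) in *.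
    assert (HA : Kc / 2 * Sg <= Rhs).
    { rewrite Hsumg. rewrite <- sm_scal. unfold Rhs. apply sm_le; intros kk Hkk.
      rewrite <- (Hsch jj (S kk)) by (unfold n in Hkk; lia).
      rewrite Hfd. specialize (HES (S kk)).
      assert (0 < Kc * h) by (apply Rmult_lt_0_compat; auto).
      replace (Kc / 2 * (h * L2 (S kk))) with ((Kc * h) * (/ 2 * L2 (S kk))) by (unfold Rdiv; ring).
      replace (h * ysig jj (S kk) * (Kc * L1 (S kk))) with ((Kc * h) * (ysig jj (S kk) * L1 (S kk))) by ring.
      apply Rmult_le_compat_l; lra. }
    assert (HB : Rhs <= P / (4 * c1) * norm0sq N h (phi jj)).
    { assert (Htsig : 0 <= tsig jj <= T).
      { unfold tsig. assert (0 <= INR jj) by apply pos_INR.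
        assert (INR jj <= INR M - 1).
        { replace (INR M - 1) with (INR (M - 1)) by (rewrite minus_INR by lia; simpl; ring). apply le_INR; auto. }
        split. apply Rmult_le_pos; lra. rewrite <- HtM. rewrite (Rmult_comm tau). apply Rmult_le_compat_r; lra. }
      assert (Esplit : Rhs = sm n (fun kk => h * ysig jj (S kk) * Lam jj (S kk)) + sm n (fun kk => h * ysig jj (S kk) * phi jj (S kk))).
      { unfold Rhs. rewrite <- sm_plus. apply sm_ext; intros; ring. }
      set (A := fun i => a jj i * (ysig jj i - ysig jj (i - 1)%nat)).
      assert (ELam : forall kk, Lam jj (S kk) = (A (S (S kk)) - A (S kk)) / (h * h) - d jj (S kk) * ysig jj (S kk)).
      { intros kk. unfold Lam, A. replace (S (S kk) - 1)%nat with (S kk) by lia. replace (S kk - 1)%nat with kk by lia. field. lra. }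
      assert (HL : sm n (fun kk => h * ysig jj (S kk) * Lam jj (S kk)) <= / h * sm n (fun kk => ysig jj (S kk) * (A (S (S kk)) - A (S kk)))).
      { rewrite <- sm_scal. apply sm_le; intros kk Hkk. rewrite ELam.
        assert (0 <= d jj (S kk)).
        { unfold d. apply Hq. split; cbn [fst snd]; [|exact Htsig]. assert (0 <= INR (S kk)) by apply pos_INR.
          assert (INR (S kk) <= INR N) by (apply le_INR; lia). split; [nra|]. rewrite <- HhN. nra. }
        replace (h * ysig jj (S kk) * ((A (S (S kk)) - A (S kk)) / (h * h) - d jj (S kk) * ysig jj (S kk)))
          with (/ h * (ysig jj (S kk) * (A (S (S kk)) - A (S kk))) - h * d jj (S kk) * ysig jj (S kk) ^ 2) by (field; lra).
        assert (0 <= h * d jj (S kk) * ysig jj (S kk) ^ 2) by (apply Rmult_le_pos; [apply Rmult_le_pos; lra| apply pow2_ge_0]).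
        lra. }
      rewrite sbp in HL.
      set (D := fun kk => (ysig jj (S kk) - ysig jj kk) ^ 2).
      assert (Esbp : ysig jj n * A (S n) - ysig jj 0%nat * A 1%nat - sm n (fun kk => (ysig jj (S kk) - ysig jj kk) * A (S kk))
                   = - sm (S n) (fun kk => a jj (S kk) * D kk)).
      { assert (E1 : sm n (fun kk => (ysig jj (S kk) - ysig jj kk) * A (S kk)) = sm n (fun kk => a jj (S kk) * D kk)).
        { apply sm_ext; intros i _. unfold A, D. replace (S i - 1)%nat with i by lia. ring. }
        assert (E2 : A (S n) = a jj (S n) * (0 - ysig jj n)).
        { unfold A. replace (S n - 1)%nat with n by lia. rewrite HvN. reflexivity. }
        rewrite E1, E2, Hv0. change (sm (S n) (fun kk => a jj (S kk) * D kk)) with (sm n (fun kk => a jj (S kk) * D kk) + a jj (S n) * D n).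
        unfold D. rewrite HvN. ring. }
      rewrite Esbp in HL.
      assert (HaD : c1 * sm (S n) D <= sm (S n) (fun kk => a jj (S kk) * D kk)).
      { rewrite <- sm_scal. apply sm_le; intros kk Hkk. apply Rmult_le_compat_r; [unfold D; apply pow2_ge_0|].
        unfold a. apply Hk. split; cbn [fst snd]; [|exact Htsig].
        assert (1 <= INR (S kk)) by (rewrite S_INR; assert (0 <= INR kk) by apply pos_INR; lra).
        assert (INR (S kk) <= INR N) by (apply le_INR; lia). split; [nra|]. rewrite <- HhN. nra. }
      assert (Hpc := poincare n (ysig jj) Hv0 HvN). cbv zeta in Hpc. fold D in Hpc.
      replace (INR (S n)) with (INR N) in Hpc by (rewrite HNn; reflexivity).
      set (SV := sm n (fun kk => ysig jj (S kk) ^ 2)) in *.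
      set (SD := sm (S n) D) in *.
      assert (HSD : 0 <= SD) by (unfold SD; apply sm_nonneg; intros; unfold D; apply pow2_ge_0).
      assert (Hnorm : norm0sq N h (phi jj) = sm n (fun kk => phi jj (S kk) * phi jj (S kk) * h)).
      { unfold norm0sq. rewrite sumR_shift by lia. reflexivity. }
      rewrite Hnorm.
      set (kap := c1 / P).
      assert (Hkap : 0 < kap) by (unfold kap; apply Rdiv_lt_0_compat; lra).
      assert (Hphi : sm n (fun kk => h * ysig jj (S kk) * phi jj (S kk)) <=
                     kap * h * SV + P / (4 * c1) * sm n (fun kk => phi jj (S kk) * phi jj (S kk) * h)).
      { unfold SV. rewrite <- !sm_scal, <- sm_plus. apply sm_le; intros kk _.
        set (vv := ysig jj (S kk)). set (ff := phi jj (S kk)).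
        assert (E : kap * vv ^ 2 + ff ^ 2 / (4 * kap) - vv * ff = (2 * kap * vv - ff) ^ 2 / (4 * kap)) by (field; lra).
        assert (0 <= (2 * kap * vv - ff) ^ 2 / (4 * kap)) by (apply Rdiv_le_0_compat; [apply pow2_ge_0| lra]).
        assert (EP : P / (4 * c1) = / (4 * kap)) by (unfold kap; field; lra).
        rewrite EP.
        assert (0 <= h * (kap * vv ^ 2 + ff ^ 2 / (4 * kap) - vv * ff)) by (apply Rmult_le_pos; lra).
        replace (kap * h * vv ^ 2 + / (4 * kap) * (ff * ff * h)) with (h * (kap * vv ^ 2 + ff ^ 2 / (4 * kap))) by (field; lra).
        nra. }
      assert (Hk2 : kap * h * (INR N ^ 2 / 4) = c1 / h).
      { unfold kap, P. rewrite <- HhN. field. lra. }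
      assert (kap * h * SV <= c1 / h * SD).
      { rewrite <- Hk2. replace (kap * h * (INR N ^ 2 / 4) * SD) with (kap * h * (INR N ^ 2 / 4 * SD)) by ring.
        apply Rmult_le_compat_l; [|exact Hpc]. apply Rmult_le_pos; lra. }
      assert (/ h * - sm (S n) (fun kk => a jj (S kk) * D kk) <= - (c1 / h) * SD).
      { assert (0 < / h) by (apply Rinv_0_lt_compat; lra). unfold Rdiv. nra. }
      rewrite Esplit. lra. }
    assert (HCm : norm0sq N h (phi jj) <= Fm).
    { assert (H := maxR_ge M (fun jj0 => norm0sq N h (phi (jj0 - 1)%nat)) (S jj) ltac:(lia)).
      simpl in H. replace (jj - 0)%nat with jj in H by lia. exact H. }
    assert (HPc : 0 <= P / (4 * c1)) by (apply Rdiv_le_0_compat; lra).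
    assert (H1 : Kc / 2 * Sg <= P / (4 * c1) * Fm).
    { apply Rle_trans with Rhs; auto. apply Rle_trans with (P / (4 * c1) * norm0sq N h (phi jj)); auto.
      apply Rmult_le_compat_l; auto. }
    unfold Bs. replace Sg with (2 / Kc * (Kc / 2 * Sg)) by (field; lra).
    replace (P / (2 * c1) * Fm / Kc) with (2 / Kc * (P / (4 * c1) * Fm)) by (field; lra).
    apply Rmult_le_compat_l; auto. apply Rdiv_le_0_compat; lra. }
  assert (HG := gronwall CC g (M - 1) Bs cm HBs Hcm).
  assert (Hfin : g (S j0) <= g 0%nat + Bs / cm).
  { apply HG; auto.
    - intros jj _. apply (Hcoef jj).
    - intros jj Hjj. apply Rle_trans with ((1 - alpha) * Rpower (INR jj + sigma) (- alpha)); [|apply (Hcoef jj)].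
      unfold cm. apply Rmult_le_compat_l; [lra|]. apply pw_dec; [lra|].
      split; [assert (0 <= INR jj) by apply pos_INR; lra|].
      assert (INR jj <= INR M - 1).
      { replace (INR M - 1) with (INR (M - 1)) by (rewrite minus_INR by lia; simpl; ring). apply le_INR; auto. }
      lra. }
  fold Fm. unfold g in Hfin. eapply Rle_trans; [exact Hfin|].
  apply Rplus_le_compat_l.
  assert (HRT : 0 < Rpower T alpha) by apply pw_pos.
  assert (EKc : Kc * cm = (1 - alpha) / G2 / Rpower T alpha).
  { unfold Kc, cm. assert (Ef := fr_eq alpha tau Htau). unfold fr in Ef. rewrite Ef.
    assert (Em : Rpower tau (- alpha) * Rpower (INR M) (- alpha) = / Rpower T alpha).
    { rewrite Rpower_mult_distr by lra. rewrite HtM. apply Rpower_Ropp. }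
    replace (tau * Rpower tau (- alpha) / G2 * / tau * ((1 - alpha) * Rpower (INR M) (- alpha)))
      with ((1 - alpha) / G2 * (Rpower tau (- alpha) * Rpower (INR M) (- alpha))) by (field; lra).
    rewrite Em. field; lra. }
  assert (EB : Bs / cm = P / (2 * c1) * Fm * G2 * Rpower T alpha / (1 - alpha)).
  { unfold Bs. replace (P / (2 * c1) * Fm / Kc / cm) with (P / (2 * c1) * Fm / (Kc * cm)) by (field; lra).
    rewrite EKc. field. repeat split; lra. }
  rewrite EB. unfold P.
  assert (HGG : G2 / (2 * (1 - alpha)) <= G1).
  { apply Rle_trans with (1 / (2 * (1 - alpha))); auto.
    apply Rmult_le_compat_r; [left; apply Rinv_0_lt_compat; lra| lra]. }
  assert (E2 : l ^ 2 / 4 / (2 * c1) * Fm * G2 * Rpower T alpha / (1 - alpha)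
     = l ^ 2 * Rpower T alpha / (4 * c1) * Fm * (G2 / (2 * (1 - alpha)))) by (field; lra).
  rewrite E2.
  replace (l ^ 2 * Rpower T alpha * G1 / (4 * c1) * Fm) with (l ^ 2 * Rpower T alpha / (4 * c1) * Fm * G1) by (field; lra).
  apply Rmult_le_compat_l; auto.
  apply Rmult_le_pos; auto. apply Rdiv_le_0_compat; [|lra]. apply Rmult_le_pos; [nra| lra].
Qed.
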